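(* Let $P(t)\in\mathbb{Q}[t]$ be an admissible Hilbert polynomial with Macaulay–Hartshorne expression $\sum_{i=0}^d\binom{t+i}{i+1}-\binom{t+i-e_i}{i+1}$, where $e_0\ge e_1\ge\dots\ge e_d>0$, and Gotzmann expression $\sum_{j=1}^r\binom{t+b_j-(j-1)}{b_j}$, where $b_1\ge b_2\ge\dots\ge b_r\ge0$. Then $r=e_0$ and the nonnegative partition $(b_1,\dots,b_r)$ is conjugate to the partition $(e_1,\dots,e_d)$; that is, for each $1\le i\le d$ exactly $e_i-e_{i+1}$ of the $b_j$ equal $i$ (where $e_{d+1}:=0$), the remaining $b_j$ being $0$.
   Context: Binomial coefficients are polynomials in $t$: $\binom{t+a}{b}=\frac{(t+a)(t+a-1)\cdots(t+a-b+1)}{b!}$ if $b\ge0$, and $0$ if $b<0$. An admissible Hilbert polynomial is the Hilbert polynomial of a nonempty closed subscheme of some projective space over an algebraically closed field; every such polynomial has a unique Macaulay–Hartshorne expression and a unique Gotzmann expression of the forms given. *)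

(* Defs.v *)
From mathcomp Require Import all_boot all_order all_algebra.
Set Implicit Arguments. Unset Strict Implicit. Unset Printing Implicit Defensive.
Import GRing.Theory Num.Theory.
Local Open Scope ring_scope.

(* binom a b : the polynomial binom(t + a, b) in Q[t], for a : int, b : nat
   (b >= 0 always in our uses):
   (t+a)(t+a-1)...(t+a-b+1) / b!  *)
Definition binom (a : int) (b : nat) : {poly rat} :=
  (b`!%:R)^-1 *: \prod_(k < b) ('X + ((a - (k : nat)%:Z)%:~R)%:P).

Definition MH_expr (d : nat) (e : nat -> nat) : {poly rat} :=
  \sum_(i < d.+1) (binom (i : nat)%:Z i.+1 - binom ((i : nat)%:Z - (e i)%:Z) i.+1).

Definition Gotzmann_expr (r : nat) (b : nat -> nat) : {poly rat} :=
  \sum_(1 <= j < r.+1) binom ((b j)%:Z - (j.-1)%:Z) (b j).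

(* Main.v *)
Require Import Defs.
From mathcomp Require Import all_boot all_order all_algebra.
From mathcomp Require Import ring lra zify.
Import GRing.Theory Num.Theory.

Lemma mono_le (f : nat -> nat) lo hi :
  (forall j, lo <= j -> j < hi -> f j.+1 <= f j) ->
  forall i k, lo <= i -> i <= k -> k <= hi -> f k <= f i.
Proof.
move=> hf i; elim=> [|k IH] hli hik hk.
- have -> : i = 0 by lia. by [].
- case: (ltnP k i) => hki.
  + have -> : i = k.+1 by lia. by [].
  + apply: leq_trans (hf k _ _) (IH _ _ _); lia.
Qed.

Lemma iotaS1 N : iota 1 N.+1 = iota 1 N ++ [:: N.+1].
Proof. by rewrite -(addn1 N) iotaD /= addnC. Qed.

Lemma count_range lo hi N : lo <= hi ->
  count (fun j => lo < j <= hi) (iota 1 N) = minn N hi - minn N lo.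
Proof.
move=> hl; elim: N => [|N IH]; first by rewrite /= !min0n.
rewrite iotaS1 count_cat IH /= addn0.
case: (boolP (lo < N.+1 <= hi)) => /= H; lia.
Qed.

Lemma prefix_count (P : pred nat) d : P 0 ->
  (forall i, i < d -> P i.+1 -> P i) ->
  forall i, i <= d -> P i = (i <= count P (iota 1 d)).
Proof.
elim: d => [|d IH] hP0 hstep i hi.
- have -> : i = 0 by lia. by rewrite hP0.
- have IH' := IH hP0 (fun i hi => hstep i (leqW hi)).
  have hc : count P (iota 1 d) <= d.
    by rewrite -[X in _ <= X](size_iota 1 d) count_size.
  rewrite iotaS1 count_cat /= addn0.
  case: (boolP (P d.+1)) => hPd /=.
  + have hd : P d by apply: hstep.
    rewrite (IH' d (leqnn d)) in hd.
    case: (ltnP d i) => hid.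
    * have -> : i = d.+1 by lia. rewrite hPd; apply/esym/idP; lia.
    * rewrite IH' //; apply/idP/idP; lia.
  + case: (ltnP d i) => hid.
    * have -> : i = d.+1 by lia. rewrite (negbTE hPd); apply/esym/idP; lia.
    * rewrite IH' //; lia.
Qed.

Local Open Scope ring_scope.

Definition h (y : rat) (b : nat) : rat :=
  (b`!%:R)^-1 * \prod_(k < b) (y - k%:R).

Lemma h0 y : h y 0 = 1.
Proof. by rewrite /h big_ord0 fact0 invr1 mulr1. Qed.

Lemma pascal y b : h y b.+1 - h (y - 1) b.+1 = h (y - 1) b.
Proof.
rewrite /h big_ord_recl big_ord_recr /=.
set Q := \prod_(i < b) (y - 1 - i%:R).
have -> : \prod_(i < b) (y - (bump 0 i)%:R) = Q.
  by apply: eq_bigr => i _; rewrite /bump /= add1n -natr1; ring.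
rewrite factS natrM -natr1.
have hf : (b`!%:R : rat) != 0 by rewrite pnatr_eq0 -lt0n fact_gt0.
have hb : (b%:R + 1 : rat) != 0 by rewrite natr1 pnatr_eq0.
field. by apply/andP.
Qed.

Lemma binomE a b x : (binom a b).[x] = h (x + a%:~R) b.
Proof.
rewrite /binom /h hornerZ horner_prod; congr (_ * _).
apply: eq_bigr => k _; rewrite hornerD hornerX hornerC intrB.
rewrite -pmulrn; ring.
Qed.

Lemma tele y b e : h y b.+1 - h (y - e%:R) b.+1 = \sum_(m < e) h (y - 1 - m%:R) b.
Proof.
elim: e => [|e IH]; first by rewrite big_ord0 subr0 subrr.
rewrite big_ord_recr /= -IH -natr1.
have P := pascal (y - e%:R) b.
rewrite (_ : y - (e%:R + 1) = y - e%:R - 1); last by ring.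
rewrite (_ : y - 1 - e%:R = y - e%:R - 1); last by ring.
rewrite -P; ring.
Qed.

Lemma hockey z b : \sum_(i < b.+1) h (z + i%:R) i = h (z + b%:R + 1) b.
Proof.
elim: b => [|b IH]; first by rewrite big_ord1 !h0.
rewrite big_ord_recr /= IH.
have P := pascal (z + b%:R + 1 + 1) b.
rewrite addrK in P.
rewrite -natr1 !addrA -P; ring.
Qed.

Definition Gf (r : nat) (b : nat -> nat) (x : rat) : rat :=
  \sum_(1 <= j < r.+1) h (x + (b j)%:R - (j.-1)%:R) (b j).

Lemma GE r b x : (Gotzmann_expr r b).[x] = Gf r b x.
Proof.
rewrite /Gotzmann_expr /Gf horner_sum; apply: eq_bigr => j _.
by rewrite binomE intrB -!pmulrn addrA.
Qed.

Lemma MHE d e x : (MH_expr d e).[x] =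
  \sum_(i < d.+1) (h (x + (i:nat)%:R) i.+1 - h (x + (i:nat)%:R - (e i)%:R) i.+1).
Proof.
rewrite /MH_expr horner_sum; apply: eq_bigr => i _.
by rewrite hornerD hornerN !binomE intrB -!pmulrn addrA.
Qed.

Lemma sum_prefix (F : nat -> rat) n s (P : pred nat) : (s <= n)%N ->
  (forall i, (i < n)%N -> P i = (i < s)%N) ->
  \sum_(0 <= i < n | P i) F i = \sum_(0 <= i < s) F i.
Proof.
move=> hs hP; rewrite (big_cat_nat (leq0n s) hs) /=.
rewrite [X in _ + X]big_nat_cond [X in _ + X]big1 ?addr0; last first.
  move=> i /andP[/andP[h1 h2]]; rewrite hP // => h3; lia.
rewrite big_nat_cond [RHS]big_nat_cond; apply: eq_bigl => i.
rewrite andbT; apply/andP/idP => [[]//|hi]; split => //; rewrite hP; lia.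
Qed.

Definition bs (d : nat) (e : nat -> nat) (j : nat) : nat :=
  count (fun i => (j <= e i)%N) (iota 1 d).

Lemma bs_char d e : (forall i, (i < d)%N -> (e i.+1 <= e i)%N) ->
  forall j, (j <= e 0)%N -> (bs d e j <= d)%N /\
  (forall i, (i <= d)%N -> (j <= e i)%N = (i <= bs d e j)%N).
Proof.
move=> He j hj; split.
  by rewrite /bs -[X in (_ <= X)%N](size_iota 1 d) count_size.
apply: prefix_count => // i hi h1; exact: leq_trans h1 (He i hi).
Qed.

Lemma MH_G d e : (forall i, (i < d)%N -> (e i.+1 <= e i)%N) ->
  forall x, (MH_expr d e).[x] = Gf (e 0%N) (bs d e) x.
Proof.
move=> He x; rewrite MHE.
pose F (i m : nat) := h (x + i%:R - 1 - m%:R) i.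
have hle : forall i, (i <= d)%N -> (e i <= e 0)%N.
  move=> i hi; apply: (@mono_le e 0 d) => // j _ hj; exact: He.
transitivity (\sum_(0 <= i < d.+1) \sum_(0 <= m < e 0%N)
                (if (m < e i)%N then F i m else 0)).
  rewrite big_mkord; apply: eq_bigr => i _; rewrite tele.
  rewrite -big_mkcond /= (@sum_prefix _ (e 0%N) (e i)) ?big_mkord //.
  by apply: hle; rewrite -ltnS.
rewrite exchange_big /=.
transitivity (\sum_(0 <= m < e 0%N) h (x - 1 - m%:R + (bs d e m.+1)%:R + 1) (bs d e m.+1)).
  apply: eq_big_nat => m hm; rewrite -big_mkcond /=.
  have [hb hc] := @bs_char d e He m.+1 ltac:(lia).
  have hP : forall i, (i < d.+1)%N -> (m < e i)%N = (i < (bs d e m.+1).+1)%N.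
    by move=> i hi; rewrite hc.
  rewrite (@sum_prefix _ d.+1 (bs d e m.+1).+1 _ hb hP).
  rewrite -hockey big_mkord; apply: eq_bigr => i _; rewrite /F; congr h; ring.
rewrite /Gf big_add1 /=; apply: eq_bigr => m _; congr h; ring.
Qed.

Section Esec.
Set Implicit Arguments. Unset Strict Implicit.

Lemma decomp r (b : nat -> nat) :
  (forall j, (1 <= j)%N -> (j < r)%N -> (b j.+1 <= b j)%N) ->
  exists s, (s <= r)%N /\ forall j, (1 <= j <= r)%N -> (0 < b j)%N = (j <= s)%N.
Proof.
move=> hb; pose P := fun i => (i == 0%N) || (0 < b i)%N.
have h := @prefix_count P r erefl.
have hs : forall i, (i < r)%N -> P i.+1 -> P i.
  rewrite /P => i hi /= h1; case: (eqVneq i 0%N) => //= hi0.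
  apply: leq_trans h1 (hb i _ hi); lia.
exists (count P (iota 1 r)); split.
  by rewrite -[X in (_ <= X)%N](size_iota 1 r) count_size.
move=> j /andP[h1 h2]; rewrite -(h hs j h2) /P.
by case: (eqVneq j 0%N) => // ?; subst j.
Qed.

Lemma Gsplit r b s : (s <= r)%N ->
  (forall j, (1 <= j <= r)%N -> (0 < b j)%N = (j <= s)%N) ->
  forall x, Gf r b x = Gf s b x + (r - s)%:R.
Proof.
move=> hs hb x; rewrite /Gf (@big_cat_nat _ _ _ s.+1) //=; congr (_ + _).
rewrite (@eq_big_nat _ _ _ _ _ _ (fun _ => 1)); last first.
  move=> j hj; have : b j = 0%N.
    have := hb j ltac:(lia); case: (b j) => // n; lia.
  by move=> ->; rewrite h0.
by rewrite sumr_const_nat subSS.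
Qed.

Lemma Gdelta s b : (forall j, (1 <= j <= s)%N -> (0 < b j)%N) ->
  forall x, Gf s b x - Gf s b (x - 1) = Gf s (fun j => (b j).-1) x.
Proof.
move=> hb x; rewrite /Gf -sumrB; apply: eq_big_nat => j hj.
move: (hb j hj); case: (b j) => // c _ /=.
rewrite (_ : x - 1 + c.+1%:R - (j.-1)%:R = (x + c.+1%:R - (j.-1)%:R) - 1); last by ring.
rewrite pascal; congr h; rewrite -natr1; ring.
Qed.

Lemma Guniq B : forall r b r' b',
  (forall j, (1 <= j)%N -> (j < r)%N -> (b j.+1 <= b j)%N) ->
  (forall j, (1 <= j)%N -> (j < r')%N -> (b' j.+1 <= b' j)%N) ->
  (forall j, (1 <= j <= r)%N -> (b j <= B)%N) ->
  (forall j, (1 <= j <= r')%N -> (b' j <= B)%N) ->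
  (forall x, Gf r b x = Gf r' b' x) ->
  r = r' /\ forall j, (1 <= j <= r)%N -> b j = b' j.
Proof.
elim: B => [|B IH] r b r' b' hb hb' hB hB' H.
- have [s [hs hsb]] := decomp hb.
  have [s' [hs' hsb']] := decomp hb'.
  have s0 : s = 0%N.
    case: s hs hsb => // t ht htb; have := htb t.+1 ltac:(lia).
    have := hB t.+1 ltac:(lia); case: (b t.+1) => //= _; lia.
  have s0' : s' = 0%N.
    case: s' hs' hsb' => // t ht htb; have := htb t.+1 ltac:(lia).
    have := hB' t.+1 ltac:(lia); case: (b' t.+1) => //= _; lia.
  subst s s'.
  have := H 0; rewrite (Gsplit hs hsb) (Gsplit hs' hsb') /Gf !big_geq // !add0r !subn0.
  move/eqP; rewrite eqr_nat => /eqP rr; subst r'; split => // j hj.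
  have := hB j hj; have := hB' j hj; lia.
- have [s [hs hsb]] := decomp hb.
  have [s' [hs' hsb']] := decomp hb'.
  have pos : forall j, (1 <= j <= s)%N -> (0 < b j)%N.
    by move=> j hj; rewrite hsb ?(andP hj).2 //; lia.
  have pos' : forall j, (1 <= j <= s')%N -> (0 < b' j)%N.
    by move=> j hj; rewrite hsb' ?(andP hj).2 //; lia.
  have HD : forall x, Gf s (fun j => (b j).-1) x = Gf s' (fun j => (b' j).-1) x.
    move=> x; rewrite -(Gdelta pos) -(Gdelta pos').
    have := H x; have := H (x - 1).
    rewrite !(Gsplit hs hsb) !(Gsplit hs' hsb') => e1 e2.
    apply/eqP; rewrite -subr_eq0; apply/eqP.
    rewrite (_ : _ - _ = (Gf s b x + (r - s)%:R - (Gf s' b' x + (r' - s')%:R))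
       - (Gf s b (x - 1) + (r - s)%:R - (Gf s' b' (x - 1) + (r' - s')%:R))); last by ring.
    by rewrite e1 e2 !subrr.
  have [ss hbb] := IH s (fun j => (b j).-1) s' (fun j => (b' j).-1)
    ltac:(move=> j h1 h2 /=; have := hb j h1 ltac:(lia); lia)
    ltac:(move=> j h1 h2 /=; have := hb' j h1 ltac:(lia); lia)
    ltac:(move=> j hj /=; have := hB j ltac:(lia); lia)
    ltac:(move=> j hj /=; have := hB' j ltac:(lia); lia) HD.
  subst s'.
  have eqb : forall j, (1 <= j <= s)%N -> b j = b' j.
    move=> j hj; have := hbb j hj; have := pos j hj; have := pos' j hj; lia.
  have := H 0; rewrite (Gsplit hs hsb) (Gsplit hs' hsb').
  rewrite [Gf s b' 0](@eq_big_nat _ _ _ _ _ _ (fun j => h (0 + (b j)%:R - (j.-1)%:R) (b j))); last first.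
    by move=> j hj; rewrite eqb.
  move/addrI/eqP; rewrite eqr_nat => /eqP hr.
  have rr : r = r' by lia.
  subst r'; split => // j hj.
  case: (leqP j s) => hjs; first by apply: eqb; lia.
  have := hsb j hj; have := hsb' j hj; case: (b j); case: (b' j) => //=; lia.
Qed.

End Esec.

Theorem lemma2p4 (P : {poly rat}) (d : nat) (e : nat -> nat) (r : nat) (b : nat -> nat) :
  (forall i, (i < d)%N -> (e i.+1 <= e i)%N) ->
  (0 < e d)%N ->
  P = MH_expr d e ->
  (forall j, (1 <= j)%N -> (j < r)%N -> (b j.+1 <= b j)%N) ->
  P = Gotzmann_expr r b ->
  r = e 0%N /\
  (forall i, (1 <= i <= d)%N ->
     count (fun j => b j == i) (iota 1 r) = (e i - (if i == d then 0 else e i.+1))%N) /\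
  (forall j, (1 <= j <= r)%N -> b j = 0%N \/ (1 <= b j <= d)%N).
Proof.
move=> He hed HP hb HG.
have Hx : forall x, Gf r b x = Gf (e 0%N) (bs d e) x.
  by move=> x; rewrite -GE -HG HP MH_G.
have hle : forall i, (i <= d)%N -> (e i <= e 0%N)%N.
  move=> i hi; apply: (@mono_le e 0 d) => // j _ hj; exact: He.
have [hr hbj] := @Guniq (b 1%N + d)%N r b (e 0%N) (bs d e) hb
  ltac:(move=> j h1 h2; rewrite /bs; exact: (sub_count (fun i (hi : (j.+1 <= e i)%N) => ltnW hi)))
  ltac:(move=> j hj; have := @mono_le b 1 r ltac:(move=> k h1 h2; exact: hb) 1 j
           ltac:(lia) ltac:(lia) ltac:(lia); lia)
  ltac:(move=> j hj; have [h1 _] := @bs_char d e He j ltac:(lia); lia) Hx.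
subst r; split => //; split.
- move=> i /andP[hi1 hi2].
  rewrite (@eq_in_count _ _ (fun j => bs d e j == i)); last first.
    by move=> j; rewrite mem_iota => hj /=; rewrite hbj //; lia.
  set lo := (if i == d then 0 else e i.+1)%N.
  have hlo : (lo <= e i)%N.
    rewrite /lo; case: (eqVneq i d) => // hid; apply: He; lia.
  rewrite (@eq_in_count _ _ (fun j => lo < j <= e i)%N); last first.
    move=> j; rewrite mem_iota => hj /=.
    have [hb1 hc] := @bs_char d e He j ltac:(lia).
    rewrite /lo; case: (eqVneq i d) => hid.
    + subst i; rewrite (hc d (leqnn d)); apply/idP/idP; lia.
    + rewrite ltnNge (hc i.+1 ltac:(lia)) (hc i ltac:(lia)); apply/idP/idP; lia.
  rewrite count_range //.
  have := hle i hi2; lia.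
- move=> j hj; rewrite hbj //.
  have [h1 _] := @bs_char d e He j ltac:(lia); lia.
Qed.
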